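(* Let $V\ge 0$ be an integrable random variable with mean $\mu=\mathbb{E}[V]$ and let $c\ge 0$. Let $u^{\mathsf{rsv}}, u^{\mathsf{bkp}}, W^{\mathsf{OI}}, W^{\mathsf{NOI}}$ be as defined in the context. Then for every $r\in\mathbb{R}$, \[ \min\{c+\mathbb{E}[\min\{V,r\}],\ r\}=\mathbb{E}[\min\{W^{\mathsf{OI}},r\}], \qquad \min\{c+\mathbb{E}[\min\{V,r\}],\ r,\ \mu\}=\mathbb{E}[\min\{W^{\mathsf{NOI}},r\}]. \] (The left-hand sides are the optimal expected costs of choosing between one item with price $V$ and inspection cost $c$ and an outside option of known cost $r$, under obligatory and nonobligatory inspection respectively.)
   Context: An item has inspection cost $c\ge 0$ and a random hidden price $V\ge 0$ with finite mean $\mu=\mathbb{E}[V]$. Its reservation price $u^{\mathsf{rsv}}$ and backup price $u^{\mathsf{bkp}}$ are defined by $\mathbb{E}[(u^{\mathsf{rsv}}-V)^+]=c$ and $\mathbb{E}[(V-u^{\mathsf{bkp}})^+]=c$ (when $c>0$ these solutions are unique; in general take $u^{\mathsf{rsv}}=\sup\{u:\mathbb{E}[(u-V)^+]\le c\}$ and $u^{\mathsf{bkp}}=\inf\{u:\mathbb{E}[(V-u)^+]\le c\}$, possibly $+\infty$). The obligatory-inspection surrogate price is the random variable $W^{\mathsf{OI}}=\max\{V,u^{\mathsf{rsv}}\}$. The nonobligatory-inspection surrogate price is the random variable $W^{\mathsf{NOI}}=\min\{W^{\mathsf{OI}},u^{\mathsf{bkp}}\}$ if $u^{\mathsf{rsv}}<u^{\mathsf{bkp}}$,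 and $W^{\mathsf{NOI}}=\mu$ (deterministically) if $u^{\mathsf{rsv}}\ge u^{\mathsf{bkp}}$. *)

(* Defs.v *)
From HB Require Import structures.
From mathcomp Require Import all_boot all_order all_algebra.
From mathcomp Require Import all_classical all_reals all_analysis.
Set Implicit Arguments. Unset Strict Implicit. Unset Printing Implicit Defensive.
Import Order.TTheory GRing.Theory Num.Theory.
Local Open Scope ring_scope.
Local Open Scope ereal_scope.

Section surrogate.
Context {d : measure_display} {T : measurableType d} {R : realType}
  (P : probability T R) (V : {RV P >-> R}) (c : R).

Definition mean_price : \bar R := 'E_P[V].

Definition u_rsv : \bar R :=
  ereal_sup [set u%:E | u in [set u : R |
     \int[P]_w (Num.max (u - V w) 0)%:E <= c%:E]].

Definition u_bkp : \bar R :=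
  ereal_inf [set u%:E | u in [set u : R |
     \int[P]_w (Num.max (V w - u) 0)%:E <= c%:E]].

Definition W_OI (w : T) : \bar R := maxe (V w)%:E u_rsv.

Definition W_NOI (w : T) : \bar R :=
  if u_rsv < u_bkp then mine (W_OI w) u_bkp else mean_price.

End surrogate.

Arguments mean_price {d T R} P V.
Arguments u_rsv {d T R} P V c.
Arguments u_bkp {d T R} P V c.
Arguments W_OI {d T R} P V c w.
Arguments W_NOI {d T R} P V c w.

(* Main.v *)
Require Import Defs.
From HB Require Import structures.
From mathcomp Require Import all_boot all_order all_algebra.
From mathcomp Require Import all_classical all_reals all_analysis.
From mathcomp Require Import lra measurable_realfun.
Import Order.TTheory GRing.Theory Num.Theory.
Local Open Scope ring_scope.
Local Open Scope ereal_scope.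

Section S.
Context (d : measure_display) (T : measurableType d)
  (R : realType) (P : probability T R) (V : {RV P >-> R}) (c : R)
  (hV0 : forall w, (0 <= V w)%R)
  (hVint : P.-integrable setT (EFin \o V))
  (hc : (0 <= c)%R).

Let mV : measurable_fun setT V. Proof. exact: measurable_funP. Qed.

Let intc (k : R) : P.-integrable setT (fun w => k%:E).
Proof. exact: finite_measure_integrable_cst. Qed.

Let int_cst (k : R) : \int[P]_w k%:E = k%:E.
Proof. rewrite integral_cst// -[RHS]mule1; congr (_ * _); exact: probability_setT. Qed.

Let intmin (u : R) : P.-integrable setT (fun w => (Num.min (V w) u)%:E).
Proof.
apply: (@le_integrable _ _ _ _ _ measurableT _ (fun w => (V w + `|u|)%:E)).
- by apply/measurable_EFinP; apply: measurable_minr.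
- move=> w _; rewrite lee_fin.
  have := hV0 w; have := ler_norm u; have := normr_ge0 u.
  move=> h1 h2 h3.
  rewrite [X in (_ <= X)%R]ger0_norm; last lra.
  rewrite /Num.min; case: ifP => _; last lra.
  rewrite ger0_norm //; lra.
- apply: (eq_integrable measurableT (fun w => (V w)%:E + `|u|%:E)) => //.
  exact: integrableD.
Qed.


Let intR (f : T -> R) := P.-integrable setT (EFin \o f).

Let lin (f g : T -> R) (k : R) : intR f -> intR g ->
  \int[P]_w ((f w + k - g w)%:E) =
  \int[P]_w (f w)%:E + k%:E - \int[P]_w (g w)%:E.
Proof.
move=> hf hg.
have hfk : intR (fun w => f w + k)%R.
  apply: (eq_integrable measurableT (fun w => (f w)%:E + k%:E)) => //.
  exact: integrableD.
under eq_integral do rewrite EFinB.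
rewrite integralB_EFin //.
under eq_integral do rewrite EFinD.
rewrite integralD_EFin //.
have -> : \int[P]_x (EFin \o (fun=> k)) x = k%:E by exact: int_cst.
by []. exact: intc.
Qed.


Ltac mm := rewrite /Order.min /Order.max /=;
  repeat (match goal with |- context [(?x < ?y)%R] =>
    lazymatch x with context [if _ then _ else _] => fail | _ =>
    lazymatch y with context [if _ then _ else _] => fail | _ =>
      case: (ltP x y) => ?; rewrite /= end end end); lra.

Let linD (f : T -> R) (k : R) : intR f ->
  \int[P]_w ((f w + k)%:E) = \int[P]_w (f w)%:E + k%:E.
Proof.
move=> hf; under eq_integral do rewrite EFinD.
rewrite integralD_EFin //; last exact: intc.
have -> : \int[P]_x (EFin \o (fun=> k)) x = k%:E by exact: int_cst.
by [].
Qed.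

Let m (u : R) : R := fine (\int[P]_w (Num.min (V w) u)%:E).
Let mE u : \int[P]_w (Num.min (V w) u)%:E = (m u)%:E.
Proof. by rewrite fineK // integrable_fin_num //; exact: intmin. Qed.
Let mu0 : R := fine (\int[P]_w (V w)%:E).
Let muE : \int[P]_w (V w)%:E = mu0%:E.
Proof. by rewrite fineK // integrable_fin_num. Qed.

Let m_mono {u u' : R} : (u <= u')%R -> (m u <= m u')%R.
Proof.
move=> h; rewrite -lee_fin -!mE; apply: le_integral => //; try exact: intmin; try exact: intc.
by move=> w _; rewrite lee_fin; mm.
Qed.

Let m_lip {u u' : R} : (u <= u')%R -> (m u' <= m u + (u' - u))%R.
Proof.
move=> h; have L := @linD (fun w => Num.min (V w) u) (u' - u)%R (intmin u).
rewrite /= mE in L.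
rewrite -lee_fin EFinD -L -mE; apply: le_integral.
- exact: measurableT.
- exact: intmin.
- apply: (eq_integrable measurableT (fun w => (Num.min (V w) u)%:E + (u' - u)%:E)) => //.
  by apply: integrableD => //; try exact: intmin; try exact: intc.
- by move=> w _; rewrite lee_fin; mm.
Qed.

Let m_le_u u : (m u <= u)%R.
Proof.
rewrite -lee_fin -mE -[X in _ <= X]int_cst; apply: le_integral => //; try exact: intmin; try exact: intc.
by move=> w _; rewrite lee_fin; mm.
Qed.

Let m_le_mu u : (m u <= mu0)%R.
Proof.
rewrite -lee_fin -mE -muE; apply: le_integral => //; try exact: intmin; try exact: intc.
by move=> w _; rewrite lee_fin; mm.
Qed.

Let m0 : m 0 = 0%R.
Proof.
apply/eqP; rewrite -(@eqe R) -mE.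
rewrite (eq_integral (fun w => 0%R%:E)); first by rewrite int_cst.
by move=> w _; congr EFin; have := hV0 w; mm.
Qed.


Let gE u : \int[P]_w (Num.max (u - V w) 0)%:E = (u - m u)%:E.
Proof.
have L := @lin (fun=> 0%R) (fun w => Num.min (V w) u) u (intc 0) (intmin u).
rewrite /= int_cst mE in L.
rewrite (eq_integral (fun w => (0 + u - Num.min (V w) u)%:E)); last first.
  by move=> w _; congr EFin; mm.
by rewrite L add0e EFinB.
Qed.

Let hE u : \int[P]_w (Num.max (V w - u) 0)%:E = (mu0 - m u)%:E.
Proof.
have L := @lin (fun w => V w) (fun w => Num.min (V w) u) 0 hVint (intmin u).
rewrite /= muE mE in L.
rewrite (eq_integral (fun w => (V w + 0 - Num.min (V w) u)%:E)); last first.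
  by move=> w _; congr EFin; mm.
by rewrite L adde0 EFinB.
Qed.

Let OI1 (a s : R) : (a <= s)%R ->
  \int[P]_w (Num.min (Num.max (V w) a) s)%:E = (m s + a - m a)%:E.
Proof.
move=> h.
have L := @lin (fun w => Num.min (V w) s) (fun w => Num.min (V w) a) a (intmin s) (intmin a).
rewrite /= !mE in L.
rewrite (eq_integral (fun w => (Num.min (V w) s + a - Num.min (V w) a)%:E)); last first.
    by move=> w _; congr EFin; mm.

by rewrite L EFinB EFinD.
Qed.

Let OI2 (a s : R) : (s <= a)%R ->
  \int[P]_w (Num.min (Num.max (V w) a) s)%:E = s%:E.
Proof.
move=> h; rewrite (eq_integral (fun w => s%:E)); first by rewrite int_cst.
by move=> w _; congr EFin; mm.
Qed.


Let S := [set u : R | (u - m u <= c)%R]%classic.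

Let S0 : S 0%R.
Proof. by rewrite /S /= m0 subr0. Qed.

Let hsupS : has_sup S.
Proof.
split; first by exists 0%R.
exists (c + mu0)%R => u; rewrite /S /= => Su.
have := m_le_mu u; lra.
Qed.

Let a := sup S.

Let aS u : S u -> (u <= a)%R.
Proof. by move=> Su; exact: (sup_upper_bound hsupS Su). Qed.

Let a_eq : (a - m a)%R = c.
Proof.
apply/eqP; rewrite eq_le; apply/andP; split.
- apply/ler_addgt0Pr => e e0.
  have [u Su hu] := sup_adherent e0 hsupS.
  have hua := aS _ Su.
  have := m_mono hua.
  rewrite /S /= in Su; rewrite -/a in hu; lra.
- rewrite leNgt; apply/negP => H.
  have he : (a <= a + (c - (a - m a)))%R by lra.
  have hm := m_mono he.
  have Su : S (a + (c - (a - m a)))%R by rewrite /S /=; lra.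
  have := aS _ Su; lra.
Qed.

Let rsvE : u_rsv P V c = a%:E.
Proof.
rewrite /u_rsv.
transitivity (ereal_sup [set u%:E | u in S]%classic); last first.
  by apply: ereal_sup_EFin; case: hsupS.
congr (ereal_sup (image _ _)); apply/funext => u; apply/propext; rewrite /S /=.
split => H.
  by rewrite -lee_fin -gE; exact: H.
by move: H; rewrite -lee_fin -gE; exact: id.
Qed.

Let B := [set u : R | (mu0 - m u <= c)%R]%classic.

Let bkpE : u_bkp P V c = ereal_inf (EFin @` B).
Proof.
rewrite /u_bkp.
congr (ereal_inf (image _ _)); apply/funext => u; apply/propext; rewrite /B /=.
split => H.
  by rewrite -lee_fin -hE; exact: H.
by move: H; rewrite -lee_fin -hE; exact: id.
Qed.

Let hlbB : has_lbound B.
Proof.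
exists (mu0 - c)%R => u; rewrite /B /= => Bu.
have := m_le_u u; lra.
Qed.

Let b := inf B.

Let bB u : B u -> (b <= u)%R.
Proof. by move=> Bu; exact: (ge_inf hlbB Bu). Qed.

Let b_eq : (B !=set0)%classic -> (mu0 - m b)%R = c.
Proof.
move=> hB; have hinf : has_inf B by split.
apply/eqP; rewrite eq_le; apply/andP; split.
- apply/ler_addgt0Pr => e e0.
  have [u Bu hu] := inf_adherent e0 hinf.
  have hbu := bB _ Bu.
  have := m_lip hbu.
  rewrite /B /= in Bu; rewrite -/b in hu; lra.
- rewrite leNgt; apply/negP => H.
  have he : (b - (c - (mu0 - m b)) <= b)%R by lra.
  have hm := m_lip he.
  have Bu : B (b - (c - (mu0 - m b)))%R by rewrite /B /=; lra.
  have := bB _ Bu; lra.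
Qed.


Lemma main_sec (r : R) :
    mine (c%:E + 'E_P[fun w => Num.min (V w) r]) r%:E
      = \int[P]_w mine (W_OI P V c w) r%:E
  /\
    mine (mine (c%:E + 'E_P[fun w => Num.min (V w) r]) r%:E) (mean_price P V)
      = \int[P]_w mine (W_NOI P V c w) r%:E.
Proof.
have Er : 'E_P[fun w => Num.min (V w) r] = (m r)%:E by rewrite unlock mE.
have Emu : mean_price P V = mu0%:E by rewrite /mean_price unlock muE.
rewrite Er Emu -EFinD -!EFin_min.
have IOI : \int[P]_w mine (W_OI P V c w) r%:E
    = \int[P]_w (Num.min (Num.max (V w) a) r)%:E.
  by apply: eq_integral => w _; rewrite /W_OI rsvE -EFin_max -EFin_min.
have hae := a_eq.
have I1 : \int[P]_w (Num.min (Num.max (V w) a) r)%:E = (Num.min (c + m r) r)%:E.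
  case: (leP r a) => h.
    rewrite OI2 //; congr EFin; have h1 := m_lip h; mm.
  rewrite OI1 ?ltW //; congr EFin; have h1 := m_lip (ltW h); mm.
split; first by rewrite IOI I1.
rewrite /W_NOI rsvE.
have [hB|hB] := pselect (B !=set0)%classic.
- have hb := b_eq hB.
  have bE : u_bkp P V c = b%:E by rewrite bkpE ereal_inf_EFin.
  rewrite bE lte_fin.
  case: (ltP a b) => hab.
  + case: (leP r b) => hrb.
    * rewrite (eq_integral (fun w => (Num.min (Num.max (V w) a) r)%:E)); last first.
        by move=> w _; rewrite /W_OI rsvE -EFin_max -!EFin_min; congr EFin; mm.
      rewrite I1; congr EFin; have h1 := m_mono hrb; mm.
    * rewrite (eq_integral (fun w => (Num.min (Num.max (V w) a) b)%:E)); last first.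
        by move=> w _; rewrite /W_OI rsvE -EFin_max -!EFin_min; congr EFin; mm.
      rewrite OI1 ?ltW //; congr EFin.
      have h1 := m_mono (ltW hrb); have h2 := m_lip (ltW hab); mm.
  + rewrite (eq_integral (fun w => (Num.min mu0 r)%:E));
      last by move=> w _; rewrite /= Emu -EFin_min.
    rewrite int_cst; congr EFin.
    case: (leP r a) => hra.
    * have h1 := m_lip hra; mm.
    * have h1 := m_mono (le_trans hab (ltW hra)); mm.
- have bE : u_bkp P V c = +oo.
    rewrite bkpE (_ : B = set0) ?image_set0 ?ereal_inf0 //.
    by apply/funext => u; apply/propext; split => // Bu; apply: hB; exists u.
  rewrite bE ltry.
  under eq_integral do rewrite miney.
  rewrite IOI I1; congr EFin.
  have hr : ~ B r by move=> Br; apply: hB; exists r.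
  rewrite /B /= in hr; move/negP: hr; rewrite -ltNge => hr; mm.
Qed.

End S.

Theorem mainTheorem1 (d : measure_display) (T : measurableType d)
  (R : realType) (P : probability T R) (V : {RV P >-> R}) (c : R)
  (hV0 : forall w, (0 <= V w)%R)
  (hVint : P.-integrable setT (EFin \o V))
  (hc : (0 <= c)%R) :
  forall r : R,
    mine (c%:E + 'E_P[fun w => Num.min (V w) r]) r%:E
      = \int[P]_w mine (W_OI P V c w) r%:E
  /\
    mine (mine (c%:E + 'E_P[fun w => Num.min (V w) r]) r%:E) (mean_price P V)
      = \int[P]_w mine (W_NOI P V c w) r%:E.
Proof.

move=> r; exact: (@main_sec d T R P V c hV0 hVint hc r).
Qed.
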